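(* Let $G=(V,E)$ be a $k$-cozy graph with edge connectivity $\kappa'(G)=2\ell$. Let $D\subset E$ with $|D|=2\ell$ be a set of edges whose removal disconnects $G$ into two components $G_1$ and $G_2$. Then $\kappa'(G_1)\ge\ell$ and $\kappa'(G_2)\ge\ell$.
   Context: An undirected graph $G$ is $k$-cozy if it is connected, $k$-regular, and equipped with a $1$-factorization, i.e., an assignment of colors from $\{1,\dots,k\}$ to its edges such that the $k$ edges incident at each vertex receive distinct colors. The edge connectivity $\kappa'(H)$ of a graph $H$ is the minimum number of edges whose removal disconnects $H$. *)

(* Defs.v *)
(* Finite simple graphs with vertex set V : {set T} and
   edge set E : {set {set T}} (each edge is a 2-element subset of V). *)
From mathcomp Require Import all_boot.
Set Implicit Arguments. Unset Strict Implicit. Unset Printing Implicit Defensive.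

Section Graphs.
Variable T : finType.

Definition is_graph (V : {set T}) (E : {set {set T}}) : Prop :=
  forall e, e \in E -> e \subset V /\ #|e| = 2.

Definition erel (E : {set {set T}}) : rel T := fun x y => [set x; y] \in E.

Definition gconnected (V : {set T}) (E : {set {set T}}) : Prop :=
  V != set0 /\ forall x y, x \in V -> y \in V -> connect (erel E) x y.

Definition disconnects (V : {set T}) (E F : {set {set T}}) : Prop :=
  F \subset E /\ ~ gconnected V (E :\: F).

Definition edge_conn_ge (V : {set T}) (E : {set {set T}}) (m : nat) : Prop :=
  forall F, disconnects V E F -> m <= #|F|.

Definition edge_conn_eq (V : {set T}) (E : {set {set T}}) (m : nat) : Prop :=
  (exists F, disconnects V E F /\ #|F| = m) /\ edge_conn_ge V E m.

Definition edges_at (E : {set {set T}}) (x : T) : {set {set T}} :=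
  [set e in E | x \in e].

(* k-cozy: connected, k-regular, with a 1-factorization (proper k-edge-colouring) *)
Definition cozy (k : nat) (E : {set {set T}}) : Prop :=
  [/\ is_graph [set: T] E,
      gconnected [set: T] E,
      (forall x, #|edges_at E x| = k) &
      exists col : {set T} -> 'I_k,
        forall x, {in edges_at E x &, injective col}].

Definition induced_edges (E : {set {set T}}) (U : {set T}) : {set {set T}} :=
  [set e in E | e \subset U].

End Graphs.

(* Main.v *)
Require Import Defs.
From mathcomp Require Import all_boot.
From mathcomp Require Import zify.

Section Aux.
Variable T : finType.

Definition cut (E : {set {set T}}) (S : {set T}) : {set {set T}} :=
  [set e in E | (e :&: S != set0) && ~~ (e \subset S)].

Lemma cut_disc (E : {set {set T}}) (S : {set T}) x y :
  x \in S -> y \notin S -> disconnects [set: T] E (cut E S).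
Proof.
move=> xS yS; split.
  by apply/subsetP => e; rewrite inE => /andP[].
move=> [_ H]; have := H x y (in_setT x) (in_setT y).
have cl : closed (erel (E :\: cut E S)) (mem S).
  move=> u v; rewrite /erel !inE => /andP[nc eE].
  case Hu: (u \in S); case Hv: (v \in S) => //; exfalso; move: nc; rewrite eE /=.
  - rewrite negb_and negbK; case/orP.
      by case/set0Pn; exists u; rewrite !inE eqxx Hu.
    by case/subsetPn; exists v; rewrite ?inE ?eqxx ?orbT ?Hv.
  - rewrite negb_and negbK; case/orP.
      by case/set0Pn; exists v; rewrite !inE eqxx orbT Hv.
    by case/subsetPn; exists u; rewrite ?inE ?eqxx ?Hu.
move/(closed_connect cl) => h.
have : x \in S = (y \in S) by exact: h.
by rewrite xS (negbTE yS).
Qed.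

Lemma two_elems (e : {set T}) z w :
  z \in e -> w \in e -> z != w -> #|e| = 2 -> e = [set z; w].
Proof.
move=> hz hw hzw he; apply/eqP; rewrite eq_sym eqEcard cards2 hzw he andbT.
by apply/subsetP=> u; rewrite !inE => /orP[]/eqP->.
Qed.

Arguments two_elems {e z w}.

Lemma arith l f a b d : 2*l <= f + a -> 2*l <= f + b -> a + b = d ->
  f < l -> d = 2*l -> False.
Proof. lia. Qed.

Lemma side (k l : nat) (E D : {set {set T}}) (V1 V2 : {set T}) :
  cozy k E ->
  edge_conn_eq [set: T] E (2 * l) ->
  D \subset E ->
  #|D| = 2 * l ->
  [disjoint V1 & V2] ->
  V1 :|: V2 = [set: T] ->
  gconnected V1 (induced_edges (E :\: D) V1) ->
  gconnected V2 (induced_edges (E :\: D) V2) ->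
  (forall e, e \in E :\: D -> e \subset V1 \/ e \subset V2) ->
  edge_conn_ge V1 (induced_edges (E :\: D) V1) l.
Proof.
move=> [Hg _ _ _] [_ Hge] DE cD dis U [V1n _] [V2n _] Hsplit F [FE Hnc].
rewrite leqNgt; apply/negP => Fl.
have cutge : forall (S : {set T}) x y, x \in S -> y \notin S -> 2*l <= #|cut E S|.
  by move=> S x y hx hy; apply: Hge; exact: cut_disc hx hy.
have [x1 x1V1] := set0Pn _ V1n.
have [x2 x2V2] := set0Pn _ V2n.
have x2n1 : x2 \notin V1 by rewrite (disjointFl dis x2V2).
have cutD : cut E V1 \subset D.
  apply/subsetP => e; rewrite !inE => /and3P[eE /set0Pn[z]].
  rewrite inE => /andP[ze zV1] nsub.
  apply/negPn/negP => eD.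
  have : e \in E :\: D by rewrite inE eD eE.
  move/Hsplit => [sub|sub]; first by rewrite sub in nsub.
  by have := subsetP sub z ze; rewrite (disjointFr dis zV1).
have eqD : cut E V1 = D.
  by apply/eqP; rewrite eqEcard cutD cD (cutge _ _ _ x1V1 x2n1).
have Dcross : forall e, e \in D -> exists2 u, u \in e & u \notin V1.
  move=> e; rewrite -eqD inE => /and3P[_ _]; case/subsetPn => u ue uV.
  by exists u.
set E1 := induced_edges (E :\: D) V1 :\: F.
have [x [y [xV yV nxy]]] : exists x y, [/\ x \in V1, y \in V1 &
                       ~~ connect (erel E1) x y].
  case: (boolP [exists x, exists y, [&& x \in V1, y \in V1 &
                       ~~ connect (erel E1) x y]]).
    move/existsP=>[x /existsP[y /and3P[a b c]]]; by exists x, y.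
  move=> /negP Hn; exfalso; apply: Hnc; split=>// x y hx hy.
  apply/negPn/negP=> hc; apply: Hn; apply/existsP; exists x; apply/existsP.
  by exists y; rewrite hx hy hc.
set A := [set z in V1 | connect (erel E1) x z].
set B := V1 :\: A.
have xA : x \in A by rewrite inE xV connect0.
have yA : y \notin A by rewrite inE yV (negbTE nxy).
have yB : y \in B by rewrite inE yA yV.
have xB : x \notin B by rewrite inE xA.
have inE1 : forall e z, e \in E -> e \notin D -> e \notin F -> z \in e ->
    z \in V1 -> e \in E1 /\ e \subset V1.
  move=> e z eE eD eF ze zV1.
  have eED : e \in E :\: D by rewrite inE eD eE.
  have sub : e \subset V1.
    case: (Hsplit e eED) => // s.
    by have := subsetP s z ze; rewrite (disjointFr dis zV1).
  by split=> //; rewrite !inE eF eD eE sub.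
have conn_step : forall e z w, e \in E1 -> z \in e -> w \in e ->
    connect (erel E1) z w.
  move=> e z w eE1 ze we.
  case: (eqVneq z w) => [->|nzw]; first exact: connect0.
  apply: connect1; rewrite /erel -(two_elems ze we nzw) //.
  have : e \in E by move: eE1; rewrite !inE => /and3P[_ /andP[]].
  by case/Hg.
set P := [set e : {set T} | e :&: A != set0].
have cutA : cut E A \subset F :|: (D :&: P).
  apply/subsetP => e; rewrite !inE => /and3P[eE /set0Pn[z]].
  rewrite inE => /andP[ze zA] nsub.
  case eD: (e \in D).
    by rewrite /= ?orbT; apply/orP; right; apply/set0Pn; exists z; rewrite inE ze zA.
  case eF: (e \in F) => //; exfalso.
  move: (zA); rewrite inE => /andP[zV1 zc].
  have [eE1 eV1] := inE1 e z eE (negbT eD) (negbT eF) ze zV1.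
  move/negP: nsub; apply; apply/subsetP => w we.
  rewrite inE (subsetP eV1 w we) /=.
  exact: connect_trans zc (conn_step _ _ _ eE1 ze we).
have cutB : cut E B \subset F :|: (D :\: P).
  apply/subsetP => e; rewrite !inE => /and3P[eE /set0Pn[z]].
  rewrite !inE => /andP[ze /andP[zA zV1]] nsub.
  case eD: (e \in D).
    apply/orP; right; rewrite /= andbT negbK; apply/eqP/setP => w; rewrite !inE. idtac.
    apply/negP => /andP[we wA].
    have [u ue uV1] := Dcross e eD.
    have nzw : z != w by apply/eqP => zw; rewrite zw wA in zA.
    have e2 : #|e| = 2 by case: (Hg e eE).
    move: ue; rewrite (two_elems ze we nzw e2) !inE => /orP[]/eqP uz.
      by rewrite uz zV1 in uV1.
    by case/andP: wA => wV1 _; rewrite uz wV1 in uV1.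
  case eF: (e \in F) => //; exfalso.
  have [eE1 eV1] := inE1 e z eE (negbT eD) (negbT eF) ze zV1.
  case/subsetPn: nsub => w we.
  rewrite !inE (subsetP eV1 w we) andbT negbK => /andP[_ wc].
  move/negP: zA; apply; rewrite zV1 /=.
  exact: connect_trans wc (conn_step _ _ _ eE1 we ze).
have cA := cutge A x y xA yA.
have cB := cutge B y x yB xB.
have lA := subset_leq_card cutA.
have lB := subset_leq_card cutB.
have h1 := leq_trans cA (leq_trans lA (leq_card_setU _ _)).
have h2 := leq_trans cB (leq_trans lB (leq_card_setU _ _)).
have sD := cardsID P D.
move: h1 h2 sD Fl cD; exact: arith.
Qed.

End Aux.

Theorem mainTheorem12 (T : finType) (k l : nat) (E D : {set {set T}})
    (V1 V2 : {set T}) :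
  cozy k E ->
  edge_conn_eq [set: T] E (2 * l) ->
  D \subset E ->
  #|D| = 2 * l ->
  [disjoint V1 & V2] ->
  V1 :|: V2 = [set: T] ->
  gconnected V1 (induced_edges (E :\: D) V1) ->
  gconnected V2 (induced_edges (E :\: D) V2) ->
  (forall e, e \in E :\: D -> e \subset V1 \/ e \subset V2) ->
  edge_conn_ge V1 (induced_edges (E :\: D) V1) l /\
  edge_conn_ge V2 (induced_edges (E :\: D) V2) l.
Proof.
move=> H1 H2 H3 H4 H5 H6 H7 H8 H9; split.
  exact: (@side T k l E D V1 V2 H1 H2 H3 H4 H5 H6 H7 H8 H9).
apply: (@side T k l E D V2 V1 H1 H2 H3 H4 _ _ H8 H7).
- by rewrite disjoint_sym.
- by rewrite setUC.
- by move=> e /H9 [];[right|left].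
Qed.
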